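(* Let $G_1,\dots,G_n$ be groups and $G=G_1\times\cdots\times G_n$. Suppose that either every automorphism of $G$ has upper triangular matrix (i.e. $\phi_{ij}$ trivial for all $i>j$), or every automorphism of $G$ has lower triangular matrix (i.e. $\phi_{ij}$ trivial for all $i<j$). Then for every $\phi\in\operatorname{Aut}(G)$ with matrix $(\phi_{ij})_{ij}$ we have $\phi_{ii}\in\operatorname{Aut}(G_i)$ for each $i$, and $\phi_{ij}\in\operatorname{Hom}(G_j,Z(G_i))$ for all $i\neq j$.
   Context: The matrix of an endomorphism $\phi$ of $G$ is $(\phi_{ij})_{ij}$ with $\phi_{ij}=\pi_i\circ\phi\circ e_j\in\operatorname{Hom}(G_j,G_i)$, $\pi_i$ the canonical projection and $e_j$ the canonical inclusion; composition of endomorphisms corresponds to matrix multiplication $(\phi\psi)_{ij}=\prod_k \phi_{ik}\circ\psi_{kj}$ (pointwise product of homomorphisms with commuting images). *)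

(* Defs.v *)
From Stdlib Require Import FunctionalExtensionality.
From mathcomp Require Import all_boot.
Set Implicit Arguments. Unset Strict Implicit. Unset Printing Implicit Defensive.

Record Grp := MkGrp {
  carrier :> Type;
  gmul : carrier -> carrier -> carrier;
  gone : carrier;
  ginv : carrier -> carrier;
  gmulA : forall x y z, gmul x (gmul y z) = gmul (gmul x y) z;
  gmul1 : forall x, gmul gone x = x;
  gmulV : forall x, gmul (ginv x) x = gone }.

Definition is_hom (G H : Grp) (f : G -> H) : Prop :=
  forall x y, f (gmul x y) = gmul (f x) (f y).
Definition is_aut (G : Grp) (f : G -> G) : Prop := is_hom f /\ bijective f.

Definition in_center (G : Grp) (z : G) : Prop := forall h : G, gmul z h = gmul h z.

Section Prod.
Variables (n : nat) (G : 'I_n -> Grp).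
Definition prod_car := forall i : 'I_n, G i.
Definition prod_mul (x y : prod_car) : prod_car := fun i => gmul (x i) (y i).
Definition prod_one : prod_car := fun i => gone (G i).
Definition prod_inv (x : prod_car) : prod_car := fun i => ginv (x i).
Lemma prod_mulA x y z : prod_mul x (prod_mul y z) = prod_mul (prod_mul x y) z.
Proof. apply: FunctionalExtensionality.functional_extensionality_dep => i; exact: gmulA. Qed.
Lemma prod_mul1 x : prod_mul prod_one x = x.
Proof. apply: FunctionalExtensionality.functional_extensionality_dep => i; exact: gmul1. Qed.
Lemma prod_mulV x : prod_mul (prod_inv x) x = prod_one.
Proof. apply: FunctionalExtensionality.functional_extensionality_dep => i; exact: gmulV. Qed.
Definition prodGrp : Grp := MkGrp prod_mulA prod_mul1 prod_mulV.

Definition proj (i : 'I_n) (x : prodGrp) : G i := x i.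
Definition incl (j : 'I_n) (g : G j) : prodGrp :=
  fun k => match j =P k with
           | ReflectT e => eq_rect j (fun t => G t) g k e
           | ReflectF _ => gone (G k)
           end.

Definition mx_entry (phi : prodGrp -> prodGrp) (i j : 'I_n) : G j -> G i :=
  fun g => proj i (phi (incl g)).

Definition trivial_hom (H K : Grp) (f : H -> K) : Prop := forall g, f g = gone K.
End Prod.
Arguments mx_entry {n G} phi i j _.
Arguments incl {n G} j g _.
Arguments proj {n G} i x.

(* Main.v *)
Require Import Defs.
From mathcomp Require Import all_boot.
Set Implicit Arguments. Unset Strict Implicit. Unset Printing Implicit Defensive.

Section S.
Variables (n : nat) (G : 'I_n -> Grp).

Lemma gmulr1 (H : Grp) (x : H) : gmul x (gone H) = x.
Proof.
have mulVr : gmul x (ginv x) = gone H.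
  rewrite -[gmul x _]gmul1 -(gmulV (ginv x)) -gmulA (gmulA (ginv x)) gmulV gmul1.
  by rewrite gmulV.
by rewrite -(gmulV x) gmulA mulVr gmul1.
Qed.

Lemma incl_eq (j : 'I_n) (g : G j) : incl j g j = g.
Proof. rewrite /incl; case: (j =P j) => [e|//]; by rewrite (eq_irrelevance e erefl). Qed.

Lemma incl_neq (j k : 'I_n) (g : G j) : j != k -> incl j g k = gone (G k).
Proof. move=> /negP H; rewrite /incl; case: (j =P k) => [e|//]; by case: H; apply/eqP. Qed.

Lemma support_lemma (psi : prodGrp G -> prodGrp G) (i : 'I_n) :
  is_hom psi -> forall s : seq 'I_n,
  (forall k, k \in s -> trivial_hom (mx_entry psi i k)) ->
  forall y : prodGrp G, (forall k, k \notin s -> y k = gone (G k)) ->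
  proj i (psi y) = gone (G i).
Proof.
move=> Hh; elim=> [|a s IH] Ht y Hy.
  have -> : y = gone (prodGrp G).
    by apply: FunctionalExtensionality.functional_extensionality_dep => k; apply: Hy.
  have e : psi (gone (prodGrp G)) = gmul (psi (gone _)) (psi (gone _)).
    by rewrite -Hh gmul1.
  have -> : psi (gone (prodGrp G)) = gone (prodGrp G).
    move: e; set p := psi _ => e.
    have E2 : gmul (ginv p) p = gmul (ginv p) (gmul p p) by rewrite -e.
    by rewrite gmulA gmulV gmul1 in E2; exact: esym E2.
  by [].
pose y' : prodGrp G := fun k => if k == a then gone (G k) else y k.
have -> : y = gmul y' (incl a (y a)).
  apply: FunctionalExtensionality.functional_extensionality_dep => k.
  rewrite /= /prod_mul /y'; case: eqP => [->|/eqP ne].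
    by rewrite incl_eq gmul1.
  by rewrite incl_neq 1?eq_sym // gmulr1.
rewrite Hh /proj /= /prod_mul.
have -> : psi (incl a (y a)) i = gone (G i).
  by have := Ht a (mem_head _ _) (y a).
rewrite gmulr1; apply: IH.
  by move=> k ks; apply: Ht; rewrite in_cons ks orbT.
move=> k ks; rewrite /y'; case: eqP => // /eqP ne; apply: Hy.
by rewrite in_cons negb_or ne.
Qed.

Variable R : 'I_n -> 'I_n -> bool.
Hypothesis Htri : forall phi : prodGrp G -> prodGrp G, is_aut phi ->
  forall i j, R i j -> trivial_hom (mx_entry phi i j).
Hypothesis Htot : forall i k : 'I_n, k != i -> R k i || R i k.

Lemma core (phi psi : prodGrp G -> prodGrp G) (i : 'I_n) :
  is_aut phi -> is_aut psi -> cancel phi psi ->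
  forall a, mx_entry psi i i (mx_entry phi i i a) = a.
Proof.
move=> Aphi Apsi K a.
pose x := phi (incl i a).
pose y : prodGrp G := fun k => if k == i then gone (G k) else x k.
have ex : x = gmul (incl i (x i)) y.
  apply: FunctionalExtensionality.functional_extensionality_dep => k.
  rewrite /= /prod_mul /y; case: eqP => [->|/eqP ne].
    by rewrite incl_eq gmulr1.
  by rewrite incl_neq 1?eq_sym // gmul1.
have := f_equal (fun z => proj i (psi z)) ex.
rewrite /= /x K /proj incl_eq (proj1 Apsi) /= /prod_mul.
have -> : psi y i = gone (G i).
  apply: (@support_lemma psi i (proj1 Apsi) [seq k <- enum 'I_n | R i k]).
    by move=> k; rewrite mem_filter => /andP [Rk _]; apply: Htri.
  move=> k; rewrite mem_filter mem_enum andbT /y => nR.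
  case: eqP => // /eqP ne.
  have := Htot ne; rewrite (negbTE nR) orbF => Rk.
  exact: (Htri Aphi Rk).
rewrite gmulr1 => E; rewrite /mx_entry /proj; exact: esym E.
Qed.

Lemma inv_aut (phi : prodGrp G -> prodGrp G) : is_aut phi ->
  exists psi, [/\ is_aut psi, cancel phi psi & cancel psi phi].
Proof.
move=> [Hh [psi K1 K2]]; exists psi; split => //; split; last by exists phi.
move=> u v; apply: (can_inj K1); by rewrite Hh !K2.
Qed.

Lemma entry_hom (phi : prodGrp G -> prodGrp G) (i j : 'I_n) :
  is_hom phi -> is_hom (mx_entry phi i j).
Proof.
move=> Hh u v; rewrite /mx_entry.
have -> : incl j (gmul u v) = gmul (incl j u) (incl j v).
  apply: FunctionalExtensionality.functional_extensionality_dep => k.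
  rewrite /= /prod_mul; case: (eqVneq j k) => [<-|ne].
    by rewrite !incl_eq.
  by rewrite !incl_neq // gmul1.
by rewrite Hh.
Qed.

Lemma main_gen (phi : prodGrp G -> prodGrp G) : is_aut phi ->
    (forall i : 'I_n, is_aut (mx_entry phi i i)) /\
    (forall i j : 'I_n, i != j ->
       is_hom (mx_entry phi i j) /\ (forall g : G j, in_center (mx_entry phi i j g))).
Proof.
move=> Aphi; have [psi [Apsi K1 K2]] := inv_aut Aphi.
have bij : forall i, bijective (mx_entry phi i i).
  move=> i; exists (mx_entry psi i i).
    exact: core.
  by move=> b; apply: core.
split.
  by move=> i; split; [apply: entry_hom; case: Aphi | apply: bij].
move=> i j ne; split; first by apply: entry_hom; case: Aphi.
move=> g h; have [f _ Kf] := bij i.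
rewrite -(Kf h) /mx_entry /proj.
have comm : gmul (incl j g) (incl i (f h)) = gmul (incl i (f h)) (incl j g) :> prodGrp G.
  apply: FunctionalExtensionality.functional_extensionality_dep => k.
  rewrite /= /prod_mul; case: (eqVneq j k) => [<-|nj].
    rewrite incl_eq incl_neq; first by rewrite gmul1 gmulr1.
    exact: ne.
  rewrite (incl_neq _ nj) gmul1; case: (eqVneq i k) => [<-|ni].
    by rewrite incl_eq gmulr1.
  by rewrite incl_neq // gmul1.
have := f_equal (fun z => phi z i) comm.
by rewrite /= !(proj1 Aphi).
Qed.
End S.

Theorem mainTheorem3 (n : nat) (G : 'I_n -> Grp) :
  ((forall phi : prodGrp G -> prodGrp G, is_aut phi ->
      forall i j : 'I_n, (j < i)%N -> trivial_hom (mx_entry phi i j)) \/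
   (forall phi : prodGrp G -> prodGrp G, is_aut phi ->
      forall i j : 'I_n, (i < j)%N -> trivial_hom (mx_entry phi i j))) ->
  forall phi : prodGrp G -> prodGrp G, is_aut phi ->
    (forall i : 'I_n, is_aut (mx_entry phi i i)) /\
    (forall i j : 'I_n, i != j ->
       is_hom (mx_entry phi i j) /\ (forall g : G j, in_center (mx_entry phi i j g))).
Proof.
case=> H phi Aphi.
  apply: (@main_gen n G (fun i j : 'I_n => (j < i)%N)) => // i k ne.
  by rewrite orbC -neq_ltn.
apply: (@main_gen n G (fun i j : 'I_n => (i < j)%N)) => // i k ne.
by rewrite -neq_ltn.
Qed.
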